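(* Let $b\in\mathbb{C}\setminus\{0,1\}$, let $\mu\ge 0$ be an integer, and let \[ W_\mu=\operatorname{span}_{\mathbb{C}}\{r_1(z),\dots,r_\mu(z)\}\oplus H_\mu \qquad(\text{so } W_0=H_0), \] where $r_i(z)=z^{-i}\big(b\,e^{z}+(1-b)\sum_{j=0}^{i-1}z^j/j!\big)$. Then $W_\mu\in Gr^{(0)}(H)$, $W_\mu$ satisfies the CKP condition, i.e. $\operatorname{Res}_z f(z)g(-z)=0$ for all $f,g\in W_\mu$, and \[ W_\mu=\{\,f(z)\in H_{-\mu}\;:\;\operatorname{Res}_z f(z)\,r_i(-z)=0\ \text{ for } 1\le i\le \mu\,\}. \]
   Context: Work in $H=\mathbb{C}((z))$, formal Laurent series in $z$ with finitely many negative powers, with $e^z=\sum_{k\ge0}z^k/k!$. For $k\in\mathbb{Z}$, $H_k=z^k\mathbb{C}[[z]]$ (series whose lowest power is at least $k$). The bilinear form on $H$ is $(f,g)=\operatorname{Res}_z f(z)g(z)$ (coefficient of $z^{-1}$). $Gr(H)$ is the set of linear subspaces $W\subset H$ with $H_k\subset W\subset H_\ell$ for some integers $k>\ell$; $Gr^{(j)}(H)$ consists of those $W\in Gr(H)$ with $j=k-\dim(W/H_k)$ whenever $H_k\subset W$. *)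

(* Defs.v *)
From mathcomp Require Import all_boot all_order all_algebra.
From mathcomp Require Import complex.
From mathcomp Require Import Rstruct.
From Stdlib Require Import ClassicalEpsilon.
Set Implicit Arguments. Unset Strict Implicit. Unset Printing Implicit Defensive.
Import Order.TTheory GRing.Theory Num.Theory.
Local Open Scope ring_scope.

Definition C : numClosedFieldType := (Rdefinitions.R)[i].

(* A (formal) series in z, given by its coefficients: f n = coefficient of z^n.
   Elements of H = C((z)) are those with a lower bound on their support. *)
Definition ser := int -> C.

Definition Hk (k : int) (f : ser) : Prop := forall n : int, n < k -> f n = 0.

Definition inH (f : ser) : Prop := exists k : int, Hk k f.

Definition ser0 : ser := fun _ => 0.
Definition seradd (f g : ser) : ser := fun n => f n + g n.
Definition serscale (c : C) (f : ser) : ser := fun n => c * f n.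
Definition sersum (d : nat) (c : 'I_d -> C) (w : 'I_d -> ser) : ser :=
  fun n => \sum_(i < d) c i * w i n.

(* f(z) |-> f(-z) *)
Definition serneg (f : ser) : ser := fun n => (-1) ^ n * f n.

(* A lower bound for the support of f (chosen classically; arbitrary if f
   is not in H). *)
Definition lb (f : ser) : int := epsilon (inhabits 0%R) (fun N => Hk N f).

(* Res_z f(z) g(z) = coefficient of z^{-1} in f g = sum_n f_n g_{-1-n};
   for f, g in H only n in [lb f, -1 - lb g] contribute. *)
Definition Res (f g : ser) : C :=
  \sum_(i < `|(- lb f - lb g)%R|%N) f (lb f + i%:Z) * g (-1 - (lb f + i%:Z)).

Definition expz : ser := fun n =>
  match n with Posz m => (m`!%:R)^-1 | Negz _ => 0 end.

Definition mono (j : int) : ser := fun n => if n == j then 1 else 0.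

Definition rfun (b : C) (i : nat) : ser := fun n =>
  let m := n + i%:Z in
  b * expz m + (1 - b) * \sum_(j < i) (j`!%:R)^-1 * mono j%:Z m.

Definition Wmu (b : C) (mu : nat) (f : ser) : Prop :=
  exists (c : 'I_mu -> C) (h : ser), Hk mu%:Z h /\
    f = seradd (sersum c (fun i => rfun b i.+1)) h.

Definition subspace (W : ser -> Prop) : Prop :=
  W ser0 /\ (forall f g, W f -> W g -> W (seradd f g)) /\
  (forall c f, W f -> W (serscale c f)).

Definition Gr (W : ser -> Prop) : Prop :=
  subspace W /\ exists k l : int, l < k /\
    (forall f, Hk k f -> W f) /\ (forall f, W f -> Hk l f).

Definition quotdim (W : ser -> Prop) (k : int) (d : nat) : Prop :=
  exists w : 'I_d -> ser, (forall i, W (w i)) /\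
    (forall c : 'I_d -> C, Hk k (sersum c w) -> forall i, c i = 0) /\
    (forall f, W f -> exists c : 'I_d -> C,
        Hk k (fun n => f n - sersum c w n)).

Definition Grj (j : int) (W : ser -> Prop) : Prop :=
  Gr W /\ forall k : int, (forall f, Hk k f -> W f) ->
    forall d : nat, quotdim W k d -> j = k - d%:Z.

Definition CKP (W : ser -> Prop) : Prop :=
  forall f g, W f -> W g -> Res f (serneg g) = 0.

(* Main.v *)
Require Import Defs.
From mathcomp Require Import all_boot all_order all_algebra zify ring.
From Stdlib Require Import FunctionalExtensionality ClassicalEpsilon.
Set Implicit Arguments. Unset Strict Implicit. Unset Printing Implicit Defensive.
Import Order.TTheory GRing.Theory Num.Theory.
Local Open Scope ring_scope.
Definition resw (a : int) (N : nat) (f g : ser) : C :=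
  \sum_(i < N) f (a + i%:Z) * g (-1 - (a + i%:Z)).

Lemma Hk_mono (a b : int) f : Hk a f -> b <= a -> Hk b f.
Proof. move=> H ba n nb; apply: H; lia. Qed.

Lemma resw_ext_r a N k f g : Hk (- a - N%:Z) g -> resw a N f g = resw a (N + k) f g.
Proof.
move=> Hg; elim: k => [|k IH]; first by rewrite addn0.
rewrite addnS /resw big_ord_recr /= -/(resw a (N + k) f g) -IH.
rewrite Hg ?mulr0 ?addr0 //; lia.
Qed.

Lemma resw_ext_l a N k f g : Hk a f -> resw a N f g = resw (a - k%:Z) (N + k) f g.
Proof.
move=> Hf; elim: k => [|k IH]; first by rewrite addn0 subr0.
rewrite IH addnS /resw big_ord_recl /= Hf ?mul0r ?add0r; last by lia.
apply: eq_bigr => i _ /=.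
by have -> : a - k.+1%:Z + (bump 0 i)%:Z = a - k%:Z + i%:Z by rewrite /bump; lia.
Qed.

Lemma resw_same a M N f g : Hk (- a - M%:Z) g -> Hk (- a - N%:Z) g ->
  resw a M f g = resw a N f g.
Proof.
wlog MN : M N / (M <= N)%N.
  move=> W HM HN; case: (leqP M N) => h; first exact: W.
  by symmetry; apply: W => //; apply: ltnW.
move=> HM _; rewrite -(subnKC MN); exact: resw_ext_r.
Qed.

Lemma window a1 N1 a2 N2 f g : Hk a1 f -> Hk (- a1 - N1%:Z) g ->
  Hk a2 f -> Hk (- a2 - N2%:Z) g -> resw a1 N1 f g = resw a2 N2 f g.
Proof.
wlog le : a1 N1 a2 N2 / a2 <= a1.
  move=> W H1 H2 H3 H4; case: (lerP a2 a1) => h; first exact: W.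
  by symmetry; apply: W => //; apply: ltW.
move=> H1 H2 H3 H4.
have -> : a2 = a1 - `|a1 - a2|%N%:Z by lia.
rewrite (resw_ext_l N1 `|a1 - a2|%N g H1).
apply: resw_same.
  by refine (Hk_mono H2 _); lia.
by refine (Hk_mono H4 _); lia.
Qed.

Lemma lb_spec f : inH f -> Hk (lb f) f.
Proof. move=> H; exact: (epsilon_spec _ (fun N => Hk N f) H). Qed.

Lemma Res_resw a N f g : Hk a f -> Hk (- a - N%:Z) g -> Res f g = resw a N f g.
Proof.
move=> Hf Hg.
have Hf' := lb_spec (ex_intro (fun k => Hk k f) a Hf).
have Hg' := lb_spec (ex_intro (fun k => Hk k g) _ Hg).
rewrite /Res -/(resw (lb f) _ f g).
apply: window => //.
refine (Hk_mono Hg' _); lia.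
Qed.

Lemma resw_eq a N f f' g g' : f =1 f' -> g =1 g' -> resw a N f g = resw a N f' g'.
Proof. by move=> E1 E2; apply: eq_bigr => i _; rewrite E1 E2. Qed.

Lemma resw_addl a N f1 f2 g :
  resw a N (fun n => f1 n + f2 n) g = resw a N f1 g + resw a N f2 g.
Proof. by rewrite /resw -big_split; apply: eq_bigr => i _; rewrite mulrDl. Qed.

Lemma resw_addr a N f g1 g2 :
  resw a N f (fun n => g1 n + g2 n) = resw a N f g1 + resw a N f g2.
Proof. by rewrite /resw -big_split; apply: eq_bigr => i _; rewrite mulrDr. Qed.

Lemma resw_subl a N f1 f2 g :
  resw a N (fun n => f1 n - f2 n) g = resw a N f1 g - resw a N f2 g.
Proof. by rewrite /resw -sumrB; apply: eq_bigr => i _; rewrite mulrBl. Qed.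

Lemma resw_suml a N m (c : nat -> C) (F : nat -> ser) g :
  resw a N (fun n => \sum_(i < m) c i * F i n) g = \sum_(i < m) c i * resw a N (F i) g.
Proof.
rewrite /resw; under eq_bigr do rewrite mulr_suml.
rewrite exchange_big; apply: eq_bigr => i _; rewrite mulr_sumr.
by apply: eq_bigr => j _; rewrite mulrA.
Qed.

Lemma resw_sumr a N m (c : nat -> C) (F : nat -> ser) f :
  resw a N f (fun n => \sum_(i < m) c i * F i n) = \sum_(i < m) c i * resw a N f (F i).
Proof.
rewrite /resw; under eq_bigr do rewrite mulr_sumr.
rewrite exchange_big; apply: eq_bigr => i _; rewrite mulr_sumr.
by apply: eq_bigr => j _; rewrite mulrCA.
Qed.

Lemma mono_eq (j : nat) (m : nat) : mono j%:Z m%:Z = if m == j then 1 else 0.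
Proof. by rewrite /mono eqz_nat. Qed.

Lemma trunc_sum (i m : nat) :
  \sum_(j < i) (j`!%:R)^-1 * mono j%:Z m%:Z = if (m < i)%N then (m`!%:R)^-1 else 0 :> C.
Proof.
elim: i => [|i IH]; first by rewrite big_ord0.
rewrite big_ord_recr /= IH mono_eq.
case: (ltngtP m i) => h.
- by rewrite (ltn_trans h) ?mulr0 ?addr0.
- have -> : (m < i.+1)%N = false by lia.
  by rewrite mulr0 addr0.
- by rewrite ?h ltnSn mulr1 add0r.
Qed.

Lemma rfun_nat b (i m : nat) :
  rfun b i (m%:Z - i%:Z) = (b + (1 - b) * (if (m < i)%N then 1 else 0)) * (m`!%:R)^-1.
Proof.
rewrite /rfun; cbv zeta.
have -> : m%:Z - i%:Z + i%:Z = m%:Z by lia.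
rewrite trunc_sum /expz; case: ifP => _; ring.
Qed.

Lemma rfun_Hk b i : Hk (- i%:Z) (rfun b i).
Proof.
move=> n ni; rewrite /rfun; cbv zeta.
case E: (n + i%:Z) => [k|k]; first by lia.
rewrite /expz mulr0 add0r big1 ?mulr0 // => j _.
rewrite -E /mono; case: eqP => h; [clear E; lia | by rewrite mulr0].
Qed.

Lemma rfun_top b i : (0 < i)%N -> rfun b i (- i%:Z) = 1.
Proof.
move=> i0; have := rfun_nat b i 0; rewrite i0 sub0r => ->.
by rewrite fact0 invr1 mulr1; ring.
Qed.

Lemma sign_sub (a t : nat) : (-1 : C) ^ (a%:Z - t%:Z) = (-1)^+a * (-1)^+t.
Proof.
rewrite expfzDr ?oppr_eq0 ?oner_eq0 // -exprnN invr_sign //.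
Qed.

Lemma prod_b (b : C) (x y : bool) : y = ~~ x ->
  (b + (1 - b) * (if x then 1 else 0)) * (b + (1 - b) * (if y then 1 else 0)) = b.
Proof. move=> ->; case: x; [change (~~ true) with false | change (~~ false) with true]; cbv iota; ring. Qed.

Lemma fact_nz n : (n`!%:R : C) != 0.
Proof. by rewrite pnatr_eq0 -lt0n fact_gt0. Qed.

Lemma inv_facts (n t : nat) : (t <= n)%N ->
  (t`!%:R : C)^-1 * ((n - t)`!%:R)^-1 = ('C(n, t))%:R * (n`!%:R)^-1.
Proof.
move=> tn; rewrite -(bin_fact tn) !natrM.
have h1 := fact_nz t; have h2 := fact_nz (n - t).
have h3 : ('C(n, t)%:R : C) != 0 by rewrite pnatr_eq0 -lt0n bin_gt0.
by field; rewrite h1 h2 h3.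
Qed.

Lemma alt_binom (n : nat) : (0 < n)%N ->
  \sum_(t < n.+1) (-1 : C) ^+ t * ('C(n, t))%:R = 0.
Proof.
move=> n0; have E := exprDn (1 : C) (-1) n.
rewrite subrr expr0n (_ : (n == 0%N) = false) in E; last by lia.
rewrite mulr0n in E; rewrite [RHS]E.
by apply: eq_bigr => t _; rewrite expr1n mul1r mulr_natr.
Qed.

Lemma rr_orth b (i' j : nat) : (0 < j)%N ->
  resw (- (i'.+1)%:Z) (i' + j).+1 (rfun b i'.+1) (serneg (rfun b j)) = 0.
Proof.
move=> j0; rewrite /resw /serneg.
set n := (i' + j)%N.
have nE : n = (i' + j)%N by [].
clearbody n.
transitivity (\sum_(t < n.+1) ((-1)^+i' * b * (n`!%:R)^-1) * ((-1 : C) ^+ t * ('C(n, t))%:R)).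
  apply: eq_bigr => t _.
  have tn : (t <= n)%N by rewrite -ltnS.
  have -> : - (i'.+1)%:Z + t%:Z = t%:Z - (i'.+1)%:Z by lia.
  have -> : -1 - (t%:Z - (i'.+1)%:Z) = (n - t)%N%:Z - j%:Z by lia.
  rewrite !rfun_nat.
  have -> : (n - t)%N%:Z - j%:Z = i'%:Z - t%:Z by lia.
  rewrite sign_sub.
  have E : (n - t < j)%N = ~~ (t < i'.+1)%N by lia.
  move: (prod_b b E); set x := (b + _) ; set y := (b + _) => Pxy.
  transitivity ((-1) ^+ i' * (-1) ^+ t * (x * y) * ((t`!%:R)^-1 * ((n - t)`!%:R)^-1)); first by ring.
  rewrite Pxy (inv_facts tn); ring.
by rewrite -mulr_sumr alt_binom ?mulr0 // nE addn_gt0 j0 orbT.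
Qed.

Definition Wn (b : C) (mu : nat) (f : ser) : Prop :=
  exists (c : nat -> C) (h : ser), Hk mu%:Z h /\
    forall n, f n = \sum_(i < mu) c i * rfun b i.+1 n + h n.

Lemma Wmu_Wn b mu f : Wmu b mu f <-> Wn b mu f.
Proof.
split.
  move=> [c [h [Hh E]]].
  exists (fun n => if insub n is Some i then c i else 0), h; split => // n.
  rewrite E /seradd /sersum; congr (_ + _).
  by apply: eq_bigr => i _; rewrite valK.
move=> [c [h [Hh E]]]; exists (fun i : 'I_mu => c i), h; split => //.
by apply: functional_extensionality => n; rewrite E.
Qed.

Lemma serneg_Hk a g : Hk a g -> Hk a (serneg g).
Proof. by move=> H n nl; rewrite /serneg H ?mulr0. Qed.

Lemma Wn_Hk b mu f : Wn b mu f -> Hk (- mu%:Z) f.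
Proof.
move=> [c [h [Hh E]]] n nl; rewrite E Hh ?addr0; last by lia.
apply: big1 => i _; rewrite rfun_Hk ?mulr0 //.
have := ltn_ord i; lia.
Qed.

Lemma sum_ind (mu m : nat) (a : C) (G : nat -> C) : (m < mu)%N ->
  \sum_(i < mu) (if (i : nat) == m then a else 0) * G i = a * G m.
Proof.
move=> mlt; rewrite (bigD1 (Ordinal mlt)) // big1 ?addr0.
  rewrite (_ : (nat_of_ord (Ordinal mlt) == m) = true); [exact: addr0 | exact: eqxx].
move=> i /=; rewrite -(inj_eq val_inj) => /negbTE.
by rewrite (_ : val (Ordinal mlt) = m) // => ->; rewrite mul0r.
Qed.

Lemma R_Wn b mu i : (i < mu)%N -> Wn b mu (rfun b i.+1).
Proof.
move=> imu; exists (fun k => if k == i then 1 else 0), ser0; split.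
  by move=> n _.
by move=> n; rewrite (@sum_ind mu i 1 (fun k => rfun b k.+1 n) imu) mul1r /ser0 addr0.
Qed.

Lemma ortho_rr b mu i j : (i < mu)%N -> (j < mu)%N ->
  resw (- mu%:Z) (mu + mu) (rfun b i.+1) (serneg (rfun b j.+1)) = 0.
Proof.
move=> imu jmu.
rewrite (@window _ _ (- (i.+1)%:Z) (i + j.+1).+1 _ _); first exact: rr_orth.
- refine (Hk_mono (@rfun_Hk b i.+1) _); lia.
- refine (Hk_mono (serneg_Hk (@rfun_Hk b j.+1)) _); lia.
- exact: rfun_Hk.
- refine (Hk_mono (serneg_Hk (@rfun_Hk b j.+1)) _); lia.
Qed.

Lemma ortho_rh mu f h : Hk mu%:Z h -> resw (- mu%:Z) (mu + mu) f (serneg h) = 0.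
Proof.
move=> Hh; rewrite /resw big1 // => t _.
by rewrite /serneg Hh ?mulr0 //; lia.
Qed.

Lemma ortho_hr mu g h : Hk mu%:Z h -> resw (- mu%:Z) (mu + mu) h g = 0.
Proof.
move=> Hh; rewrite /resw big1 // => t _.
rewrite Hh ?mul0r //; have := ltn_ord t; lia.
Qed.

Lemma Res_n mu f g : Hk (- mu%:Z) f -> Hk (- mu%:Z) g ->
  Res f g = resw (- mu%:Z) (mu + mu) f g.
Proof.
move=> Hf Hg; apply: Res_resw => //.
refine (Hk_mono Hg _); lia.
Qed.

Lemma CKP_n b mu f g : Wn b mu f -> Wn b mu g ->
  resw (- mu%:Z) (mu + mu) f (serneg g) = 0.
Proof.
move=> [c [h [Hh E]]] [d [h' [Hh' E']]].
rewrite (@resw_eq _ _ f (fun n => \sum_(i < mu) c i * rfun b i.+1 n + h n)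
   (serneg g) (fun n => \sum_(i < mu) d i * serneg (rfun b i.+1) n + serneg h' n)).
- rewrite resw_addl (ortho_hr _ Hh) addr0 (@resw_suml _ _ _ c (fun i => rfun b i.+1)).
  rewrite big1 // => i _.
  rewrite resw_addr (@resw_sumr _ _ _ d (fun i => serneg (rfun b i.+1))) (ortho_rh _ Hh') addr0 big1 ?mulr0 // => j _.
  by rewrite ortho_rr ?mulr0.
- exact: E.
- move=> n; rewrite /serneg E' mulrDr mulr_sumr; congr (_ + _).
  by apply: eq_bigr => i _; rewrite mulrCA.
Qed.

Lemma reduce b mu m : (m <= mu)%N -> forall f, Hk (- m%:Z) f ->
  exists c : nat -> C, Hk 0 (fun n => f n - \sum_(i < mu) c i * rfun b i.+1 n).
Proof.
elim: m => [|m IH] lemu f Hf.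
  exists (fun _ => 0) => n n0; rewrite Hf; last by lia.
  by rewrite big1 ?subr0 // => i _; rewrite mul0r.
have mlt : (m < mu)%N by [].
pose a := f (- (m.+1)%:Z).
have Hf' : Hk (- m%:Z) (fun n => f n - a * rfun b m.+1 n).
  move=> n nl; case: (ltrP n (- (m.+1)%:Z)) => h.
    by rewrite Hf // (@rfun_Hk b m.+1) // mulr0 subrr.
  have -> : n = - (m.+1)%:Z by lia.
  by rewrite rfun_top // mulr1 subrr.
have [c' Hc'] := IH (ltnW mlt) _ Hf'.
exists (fun i => c' i + (if i == m then a else 0)) => n nl.
have E : \sum_(i < mu) (c' i + (if (i : nat) == m then a else 0)) * rfun b i.+1 n
   = \sum_(i < mu) c' i * rfun b i.+1 n + a * rfun b m.+1 n.
  under eq_bigr do rewrite mulrDl.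
  by rewrite big_split (@sum_ind mu m a (fun k => rfun b k.+1 n) mlt).
rewrite E opprD addrA (addrAC (f n)); exact: Hc' n nl.
Qed.

Lemma lift_H b mu g : Hk 0 g ->
  (forall i, (1 <= i <= mu)%N -> resw (- mu%:Z) (mu + mu) g (serneg (rfun b i)) = 0) ->
  Hk mu%:Z g.
Proof.
move=> H0 HR.
suff : forall p, (p <= mu)%N -> Hk p%:Z g by apply.
elim => [|p IH] pmu //.
have Hp := IH (ltnW pmu).
have := HR p.+1 pmu.
rewrite (@window _ _ p%:Z 1 _ _).
- rewrite /resw big_ord1 addr0.
  have -> : -1 - p%:Z = - (p.+1)%:Z by lia.
  have s0 : ((-1 : C) ^ (- (p.+1)%:Z) == 0) = false.
    by apply/negbTE/expfz_neq0; rewrite oppr_eq0 oner_eq0.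
  rewrite /serneg rfun_top // mulr1 => /eqP; rewrite mulf_eq0 s0 orbF.
  move=> /eqP gp n nl; case: (ltrP n p%:Z) => h; first exact: Hp.
  by have -> : n = p%:Z by lia.
- refine (Hk_mono H0 _); lia.
- refine (Hk_mono (serneg_Hk (@rfun_Hk b p.+1)) _); lia.
- exact: Hp.
- refine (Hk_mono (serneg_Hk (@rfun_Hk b p.+1)) _); lia.
Qed.

Lemma charac b mu f : Wn b mu f <->
  (Hk (- mu%:Z) f /\ forall i : nat, (1 <= i <= mu)%N -> Res f (serneg (rfun b i)) = 0).
Proof.
split.
  move=> W; have Hf := Wn_Hk W; split => // -[|i] // /andP [_ imu].
  rewrite (Res_n Hf); first exact: (CKP_n W (R_Wn b imu)).
  refine (Hk_mono (serneg_Hk (@rfun_Hk b i.+1)) _); lia.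
move=> [Hf HR].
have [c Hc] := reduce b (leqnn mu) Hf.
exists c, (fun n => f n - \sum_(i < mu) c i * rfun b i.+1 n); split; last first.
  by move=> n; rewrite addrC subrK.
apply: (lift_H (b := b)) => // -[|i] // /andP [_ imu].
rewrite resw_subl (@resw_suml _ _ _ c (fun i => rfun b i.+1)).
rewrite big1 ?subr0.
  rewrite -(Res_n Hf); first exact: HR.
  refine (Hk_mono (serneg_Hk (@rfun_Hk b i.+1)) _); lia.
by move=> k _; rewrite ortho_rr ?mulr0.
Qed.

Definition matw (lo kn d : nat) (w : 'I_d -> ser) : 'M[C]_(d, lo + kn) :=
  \matrix_(i, j) w i ((j : nat)%:Z - lo%:Z).

Lemma sersum_Hk a d (c : 'I_d -> C) w : (forall i, Hk a (w i)) -> Hk a (sersum c w).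
Proof. by move=> H n nl; rewrite /sersum big1 // => i _; rewrite H ?mulr0. Qed.

Lemma free_matw (W : ser -> Prop) lo kn d (w : 'I_d -> ser) :
  (forall f, W f -> Hk (- lo%:Z) f) -> (forall i, W (w i)) ->
  (forall c : 'I_d -> C, Hk kn%:Z (sersum c w) -> forall i, c i = 0) ->
  row_free (matw lo kn w).
Proof.
move=> WH Ww Hind; rewrite -kermx_eq0; apply/rowV0P => v /sub_kermxP E.
have Hs : Hk kn%:Z (sersum (fun i => v 0 i) w).
  move=> n nl; case: (ltrP n (- lo%:Z)) => h.
    by apply: (sersum_Hk _ (fun i => WH _ (Ww i))).
  have jlt : (absz (n + lo%:Z)%R < lo + kn)%N by lia.
  have := congr1 (fun M : 'M[C]_(1, lo + kn) => M ord0 (Ordinal jlt)) E.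
  rewrite !mxE /sersum => E'; rewrite -[RHS]E'; apply: eq_bigr => i _; rewrite mxE.
  by have -> : ((Ordinal jlt : nat))%:Z - lo%:Z = n by rewrite /=; lia.
by apply/rowP => i; rewrite mxE (Hind _ Hs i).
Qed.

Lemma sub_matw (W : ser -> Prop) lo kn d1 d2 (w1 : 'I_d1 -> ser) (w2 : 'I_d2 -> ser) :
  (forall i, W (w1 i)) ->
  (forall f, W f -> exists c : 'I_d2 -> C, Hk kn%:Z (fun n => f n - sersum c w2 n)) ->
  (matw lo kn w1 <= matw lo kn w2)%MS.
Proof.
move=> W1 Sp; apply/row_subP => i.
have [c Hc] := Sp _ (W1 i).
have -> : row i (matw lo kn w1) = (\row_j c j) *m matw lo kn w2.
  apply/rowP => j; rewrite !mxE.
  have := Hc ((j : nat)%:Z - lo%:Z).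
  rewrite (_ : ((j : nat)%:Z - lo%:Z < kn%:Z) = true); last by have := ltn_ord j; lia.
  move=> /(_ isT) /eqP; rewrite subr_eq0 => /eqP ->.
  by rewrite /sersum; apply: eq_bigr => k _; rewrite !mxE.
exact: submxMl.
Qed.

Lemma dim_unique (W : ser -> Prop) lo kn d1 d2 :
  (forall f, W f -> Hk (- lo%:Z) f) -> quotdim W kn%:Z d1 -> quotdim W kn%:Z d2 -> d1 = d2.
Proof.
move=> WH [w1 [W1 [I1 S1]]] [w2 [W2 [I2 S2]]].
have /eqP r1 := free_matw (kn := kn) WH W1 I1.
have /eqP r2 := free_matw (kn := kn) WH W2 I2.
have le1 := mxrankS (sub_matw lo W1 S2).
have le2 := mxrankS (sub_matw lo W2 S1).
rewrite r1 r2 in le1 le2; apply/eqP; rewrite eqn_leq le1 le2 //.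
Qed.

Lemma sum_one (n : nat) (F : 'I_n -> C) (i0 : 'I_n) :
  (forall i, i != i0 -> F i = 0) -> \sum_i F i = F i0.
Proof.
move=> H; rewrite (bigD1 i0) // big1; first exact: addr0.
by move=> i /andP [_ /H].
Qed.

Definition bvec (b : C) (mu kn : nat) (i : 'I_kn) : ser :=
  if ((i : nat) < mu)%N then rfun b (i : nat).+1 else mono (i : nat)%:Z.

Lemma bvec_W b mu kn (i : 'I_kn) : Wn b mu (@bvec b mu kn i).
Proof.
rewrite /bvec; case: ifP => h; first exact: R_Wn.
exists (fun _ => 0), (mono i); split.
  by move=> n nl; rewrite /mono; case: eqP => // e; move: h nl; rewrite e; lia.
by move=> n; rewrite big1 ?add0r // => j _; rewrite mul0r.
Qed.

Lemma bvec_ind b mu kn : (mu <= kn)%N -> forall u : 'I_kn -> C,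
  Hk kn%:Z (sersum u (@bvec b mu kn)) -> forall i, u i = 0.
Proof.
move=> mukn u H.
have A : forall t, (t <= mu)%N -> forall i : 'I_kn, (mu - t <= i < mu)%N -> u i = 0.
  elim => [|t IH] tmu i.
    by move=> /andP [h1 h2]; move: h1 h2; lia.
  move=> /andP [h1 h2].
  case: (ltnP i (mu - t)) => h3; last by apply: IH; [exact: ltnW | rewrite h3 h2].
  have ie : (i : nat) = (mu - t.+1)%N by lia.
  have := H (- ((i : nat).+1)%:Z); rewrite /sersum => E.
  rewrite -[u i]mulr1 -(@rfun_top b (i : nat).+1) //.
  rewrite -E; last by lia.
  rewrite (sum_one (i0 := i)); first by rewrite /bvec h2.
  move=> j ji; rewrite /bvec.
  case: ifP => jmu; last first.
    rewrite /mono; case: eqP => e; last by rewrite mulr0.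
    by move: e; lia.
  case: (ltnP j i) => jl.
    by rewrite (@rfun_Hk b (j : nat).+1) ?mulr0 //; lia.
  rewrite IH ?mul0r //; first exact: ltnW.
  have : (j : nat) != i by rewrite (inj_eq val_inj).
  move: jl jmu; lia.
move=> i; case: (ltnP i mu) => imu.
  by apply: (A mu (leqnn mu)); rewrite subnn imu.
have := H (i : nat)%:Z; rewrite /sersum => E.
rewrite -[u i]mulr1 (_ : 1 = mono (i : nat)%:Z (i : nat)%:Z); last by rewrite /mono eqxx.
rewrite -E; last by have := ltn_ord i; lia.
rewrite (sum_one (i0 := i)); first by rewrite /bvec ltnNge imu.
move=> j ji; rewrite /bvec; case: ifP => jmu.
  by rewrite (A mu (leqnn mu)) ?mul0r // subnn jmu.
rewrite /mono; case: eqP => e; last by rewrite mulr0.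
have : (j : nat) != i by rewrite (inj_eq val_inj).
by move: e; lia.
Qed.

Lemma bvec_span b mu kn f : (mu <= kn)%N -> Wn b mu f ->
  exists u : 'I_kn -> C, Hk kn%:Z (fun n => f n - sersum u (@bvec b mu kn) n).
Proof.
move=> mukn [c [h [Hh E]]].
exists (fun i : 'I_kn => if ((i : nat) < mu)%N then c i else h (i : nat)%:Z) => n nl.
rewrite E /sersum (bigID (fun i : 'I_kn => ((i : nat) < mu)%N)) /=.
have -> : \sum_(i < kn | (i < mu)%N)
    (if (i < mu)%N then c i else h i) * bvec b mu i n
    = \sum_(i < mu) c i * rfun b i.+1 n.
  rewrite (big_ord_widen _ (fun i => c i * rfun b i.+1 n) mukn).
  by apply: eq_bigr => i hi; rewrite /bvec hi.
have -> : \sum_(i < kn | ~~ (i < mu)%N)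
    (if (i < mu)%N then c i else h i) * bvec b mu i n = h n.
  case: (ltrP n mu%:Z) => hn.
    rewrite Hh // big1 // => i /negbTE hi; rewrite /bvec hi /mono.
    by case: eqP => e; [move: hi; lia | rewrite mulr0].
  have mkn : (absz n < kn)%N by lia.
  rewrite (bigD1 (Ordinal mkn)); last by rewrite /= -leqNgt; lia.
  rewrite big1.
    rewrite /bvec (_ : (absz n < mu)%N = false); last by lia.
    rewrite /mono (_ : (absz n)%:Z = n); last by lia.
    rewrite eqxx mulr1; exact: addr0.
  move=> i /andP [/negbTE hi ne]; rewrite /bvec hi /mono.
  case: eqP => e; last by rewrite mulr0.
  have : (i : nat) != absz n by rewrite -[absz n]/(val (Ordinal mkn)) (inj_eq val_inj).
  by move: e; lia.
by rewrite opprD addrACA !subrr addr0.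
Qed.

Lemma Wmu_subspace b mu : subspace (Wmu b mu).
Proof.
split; [|split].
- apply/Wmu_Wn; exists (fun _ => 0), ser0; split; first by [].
  by move=> n; rewrite big1 ?add0r // => i _; rewrite mul0r.
- move=> f g /Wmu_Wn [c [h [Hh E]]] /Wmu_Wn [d [h' [Hh' E']]]; apply/Wmu_Wn.
  exists (fun i => c i + d i), (seradd h h'); split.
    by move=> n nl; rewrite /seradd Hh ?Hh' ?addr0.
  move=> n; rewrite /seradd E E'.
  under [X in _ = X + _]eq_bigr do rewrite mulrDl.
  by rewrite big_split addrACA.
- move=> a f /Wmu_Wn [c [h [Hh E]]]; apply/Wmu_Wn.
  exists (fun i => a * c i), (serscale a h); split.
    by move=> n nl; rewrite /serscale Hh ?mulr0.
  move=> n; rewrite /serscale E mulrDr mulr_sumr.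
  by congr (_ + _); apply: eq_bigr => i _; rewrite mulrA.
Qed.

Lemma mono_Hk (j k : int) : k <= j -> Hk k (mono j).
Proof. by move=> kj n nl; rewrite /mono; case: eqP => // e; move: nl; rewrite e; lia. Qed.

Lemma k_ge_mu b mu (k : int) : (forall f, Hk k f -> Wmu b mu f) -> mu%:Z <= k.
Proof.
move=> H; case: (lerP mu%:Z k) => // kl; exfalso.
case: mu H kl => [|m] H kl.
  have kl' : k <= -1 by lia.
  have W := Wn_Hk ((Wmu_Wn _ _ _).1 (H (mono (-1)) (@mono_Hk (-1) k kl'))).
  have := W (-1); rewrite /mono eqxx => /(_ isT) /eqP; rewrite oner_eq0 //.
have kl' : k <= m%:Z by lia.
have [_ R] := (charac _ _ _).1 ((Wmu_Wn _ _ _).1 (H (mono m%:Z) (@mono_Hk m%:Z k kl'))).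
  have := R m.+1; rewrite leqnn => /(_ isT).
  rewrite (@Res_resw m%:Z 1).
  - rewrite /resw big_ord1 addr0 /mono eqxx mul1r /serneg.
    have -> : -1 - m%:Z = - (m.+1)%:Z by lia.
    rewrite rfun_top // mulr1 => /eqP; apply/negP; apply: expfz_neq0.
    by rewrite oppr_eq0 oner_eq0.
  - exact: mono_Hk.
  - refine (Hk_mono (serneg_Hk (@rfun_Hk b m.+1)) _); lia.
Qed.

Unset Implicit Arguments.
Set Strict Implicit.

Theorem proposition2 (b : C) (mu : nat) :
  b != 0 -> b != 1 ->
  Grj 0 (Wmu b mu) /\ CKP (Wmu b mu) /\
  (forall f : ser, Wmu b mu f <->
     (Hk (- mu%:Z) f /\
      forall i : nat, (1 <= i <= mu)%N -> Res f (serneg (rfun b i)) = 0)).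
Proof.
move=> _ _.
have WH : forall f, Wmu b mu f -> Hk (- mu%:Z) f.
  by move=> f Wf; exact: (Wn_Hk ((Wmu_Wn b mu f).1 Wf)).
split; [|split].
- split.
  + split; first exact: Wmu_subspace.
    exists (mu.+1)%:Z, (- mu%:Z); split; first by lia.
    split; last exact: WH.
    move=> f Hf; apply/Wmu_Wn; exists (fun _ => 0), f; split.
      by refine (Hk_mono Hf _); lia.
    by move=> n; rewrite big1 ?add0r // => i _; rewrite mul0r.
  + move=> k Hk d Q.
    have kge := k_ge_mu Hk.
    case: k Hk Q kge => [kn|kn] Hk Q kge; last by lia.
    have mukn : (mu <= kn)%N by lia.
    have Qb : quotdim (Wmu b mu) kn%:Z kn.
      exists (@bvec b mu kn); split; [|split].
      * by move=> i; apply/Wmu_Wn; exact: bvec_W.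
      * exact: bvec_ind.
      * by move=> f /Wmu_Wn Wf; exact: bvec_span.
    by rewrite (dim_unique WH Q Qb) subrr.
- move=> f g Wf Wg; rewrite (Res_n (WH _ Wf) (serneg_Hk (WH _ Wg))).
  exact: (CKP_n ((Wmu_Wn b mu f).1 Wf) ((Wmu_Wn b mu g).1 Wg)).
- by move=> f; rewrite Wmu_Wn; exact: charac.
Qed.
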